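(* Let $K$ be a field, $S=K[x_1,\dots,x_n]$, $A\subseteq\{1,\dots,n\}$, $f=\prod_{j\in A}x_j$, and let $uK[Z]$ be a Stanley space of $S_f$. Then $H_{uK[Z]}(t)=Q(t)/(1-t)^m$, where $Q(t)$ is a polynomial with $Q(1)=1$ and $m=|Z|$.
   Context: $S_f=K[x_1,\dots,x_n,x_j^{-1}:j\in A]$ with $K$-basis the monomials $x^a=x_1^{a_1}\cdots x_n^{a_n}$, $a_j\in\mathbb Z$ for $j\in A$, $a_j\in\mathbb N$ otherwise. A Stanley space of $S_f$ is $uK[Z]$, the $K$-span of the monomials $uw$ ($w$ a monomial in the elements of $Z$), where $u$ is a monomial of $S_f$, $Z\subseteq\{x_1,\dots,x_n\}\cup\{x_j^{-1}:j\in A\}$ with $\{x_j,x_j^{-1}\}\not\subseteq Z$ for all $j\in A$, and $uK[Z]$ is a free $K[Z]$-module. It is $\mathbb Z^n$-graded with $x^a$ in degree $a$. For such a graded space $M=\bigoplus_aM_a$ with finite-dimensional components, $|a|=\sum_j|a_j|$, $M_d=\bigoplus_{|a|=d}M_a$, $H(M,d)=\dim_KM_d$, $H_M(t)=\sum_{d\ge0}H(M,d)t^d$. *)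

(* Defs.v *)
From mathcomp Require Import all_boot all_order all_algebra.
Set Implicit Arguments. Unset Strict Implicit. Unset Printing Implicit Defensive.
Import Order.TTheory GRing.Theory Num.Theory.
Local Open Scope ring_scope.

(* Exponent vectors of Laurent monomials x^a, a : 'I_n -> int
   (variables x_1..x_n are indexed by 'I_n = {0,..,n-1}). *)

Definition absdeg (n : nat) (a : 'I_n -> int) : nat := (\sum_(i < n) `|a i|)%N.

(* Stanley space u K[Z] with Z = {x_i : i in P} ∪ {x_j^{-1} : j in N}.
   x^a lies in u K[Z] iff a = u + e with e_i >= 0 (i in P), e_i <= 0 (i in N),
   e_i = 0 otherwise. *)
Definition in_stanley (n : nat) (u : 'I_n -> int) (P N : {set 'I_n})
    (a : 'I_n -> int) : bool :=
  [forall i, if i \in P then u i <= a i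
             else if i \in N then a i <= u i
             else a i == u i].

Definition decode (n d : nat) (v : {ffun 'I_n -> 'I_(2 * d + 1)}) : 'I_n -> int :=
  fun i => (nat_of_ord (v i))%:Z - d%:Z.

(* H(uK[Z], d) = dim_K (uK[Z])_d = number of monomials x^a in uK[Z] with
   |a| = d (all such a lie in [-d,d]^n). *)
Definition hilb (n : nat) (u : 'I_n -> int) (P N : {set 'I_n}) (d : nat) : nat :=
  #|[set v : {ffun 'I_n -> 'I_(2 * d + 1)} |
      in_stanley u P N (decode v) && (absdeg (decode v) == d)]|.

(* Main.v *)
Require Import Defs.
From mathcomp Require Import all_boot all_order all_algebra.
From mathcomp Require Import zify.
Import Order.TTheory GRing.Theory Num.Theory.
Local Open Scope ring_scope.

Section S.
Variables (n : nat) (u : 'I_n -> int) (P N : {set 'I_n}).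

Definition okf (i : 'I_n) (a : int) : bool :=
  if i \in P then u i <= a else if i \in N then a <= u i else a == u i.

Definition cnt (i : 'I_n) (j : nat) : int :=
  (okf i j%:Z)%:R + ((j != 0)%N && okf i (- j%:Z))%:R.

Definition Fpol (B : nat) (i : 'I_n) : {poly int} :=
  \sum_(x : 'I_(2 * B + 1)) (okf i (x%:Z - B%:Z))%:R *: 'X^(`|x%:Z - B%:Z|%N).

Lemma sum_ord_eq (M c : nat) (f : nat -> int) : (c < M)%N ->
  \sum_(x < M) (x == c :> nat)%:R * f x = f c.
Proof.
move=> h; rewrite (bigD1 (Ordinal h)) //= eqxx mul1r big1 ?addr0 // => x hx.
have -> : (x == c :> nat) = false.
  by apply/negbTE; apply: contra hx => /eqP e; apply/eqP/val_inj.
by rewrite mul0r.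
Qed.

Lemma absE (x : nat) {B j : nat} : (j <= B)%N ->
  (j == `|x%:Z - B%:Z|%N) = (x == B + j)%N || ((j != 0)%N && (x == B - j)%N).
Proof.
move=> h; apply/eqP/orP => [H|[/eqP H|/andP[H1 /eqP H2]]].
- case: (ltnP x B)=> hx; [right; apply/andP; split; lia| left; lia].
- lia.
- lia.
Qed.

Lemma coefF B i j : (j <= B)%N -> (Fpol B i)`_j = cnt i j.
Proof.
move=> hj; rewrite /Fpol coef_sum.
under eq_bigr => x _ do rewrite coefZ coefXn (absE x hj).
have E : forall x : nat,
  ((x == B + j) || ((j != 0) && (x == B - j)))%N%:R
  = (x == B + j)%N%:R + ((j != 0)%N%:R * (x == B - j)%N%:R : int).
  move=> x; have [->|jn0] := eqVneq j 0%N.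
    by rewrite /= orbF mul0r addr0.
  rewrite /= mul1r; case: (eqVneq x (B + j)) => [->|hx] /=.
    by have -> : (B + j == B - j)%N = false by apply/negbTE/eqP; lia.
  by rewrite add0r.
under eq_bigr => x _ do rewrite E mulrDr mulrCA.
rewrite big_split /= -mulr_sumr.
under eq_bigr => x _ do rewrite mulrC.
under [X in _ + _ * X]eq_bigr => x _ do rewrite mulrC.
rewrite (sum_ord_eq _ _ (fun x : nat => (okf i (x%:Z - B%:Z))%:R)); last by lia.
rewrite (sum_ord_eq _ _ (fun x : nat => (okf i (x%:Z - B%:Z))%:R)); last by lia.
rewrite /cnt.
have -> : ((B + j)%N%:Z - B%:Z) = j%:Z by lia.
have [->|jn0] := eqVneq j 0%N; first by rewrite /= mul0r.
have -> : ((B - j)%N%:Z - B%:Z) = - j%:Z by lia.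
by rewrite /= mul1r.
Qed.

End S.

Lemma prod_bool (I : finType) (b : I -> bool) :
  (\prod_i (b i : nat))%N = [forall i, b i].
Proof.
case: (boolP [forall i, b i]) => [/forallP H | /forallPn [i Hi]].
  by rewrite big1 // => i _; rewrite H.
by rewrite (bigD1 i) //= (negbTE Hi) mul0n.
Qed.

Lemma prodXn (I : finType) (e : I -> nat) :
  \prod_i ('X^(e i) : {poly int}) = 'X^(\sum_i e i).
Proof.
by rewrite (big_morph (fun k => ('X^k : {poly int})) (exprD _) (expr0 _)).
Qed.

Lemma hilbE n u P N k :
  (hilb u P N k)%:R = (\prod_(i < n) Fpol n u P N k i)`_k.
Proof.
rewrite /Fpol bigA_distr_bigA /= coef_sum.
under eq_bigr => f _ do under eq_bigr => i _ do rewrite -mul_polyC.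
under eq_bigr => f _ do rewrite big_split /= -rmorph_prod prodXn coefCM coefXn -natr_prod prod_bool -natrM.
rewrite -natr_sum /hilb -sum1dep_card big_mkcond /=; congr (_%:R).
apply: eq_bigr => f _; rewrite /in_stanley /absdeg /decode.
rewrite /okf [(k == _)]eq_sym.
by case: [forall i, _]; case: (_ == k).
Qed.

Lemma cnt_big n u P N i j : (`|u i| < j)%N ->
  cnt n u P N i j = if i \in P :|: N then 1 else 0.
Proof.
move=> h; rewrite /cnt /okf in_setU.
have jn0 : (j != 0)%N by lia.
rewrite jn0 /=.
case: ifP => iP /=.
  have -> : (u i <= j%:Z) by lia.
  have -> : (u i <= - j%:Z) = false by apply/negbTE; rewrite -ltNge; lia.
  by [].
case: ifP => iN /=.
  have -> : (j%:Z <= u i) = false by apply/negbTE; rewrite -ltNge; lia.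
  have -> : (- j%:Z <= u i) by lia.
  by [].
have -> : (j%:Z == u i) = false by apply/negbTE/eqP; lia.
have -> : (- j%:Z == u i) = false by apply/negbTE/eqP; lia.
by [].
Qed.

Lemma cnt_notPN n u P N i j : i \notin P :|: N ->
  cnt n u P N i j = (j == `|u i|)%N%:R.
Proof.
rewrite /cnt /okf in_setU negb_or => /andP[/negbTE -> /negbTE ->].
case: (eqVneq j `|u i|%N) => [->|hne] /=.
  case: (eqVneq (u i) 0) => [->|hu0] //.
  have -> : (`|u i|%N != 0)%N by lia.
  case: (lerP 0 (u i)) => hu.
    have -> : (`|u i|%N%:Z == u i) by apply/eqP; lia.
    by have -> : (- `|u i|%N%:Z == u i) = false by apply/negbTE/eqP; lia.
  have -> : (`|u i|%N%:Z == u i) = false by apply/negbTE/eqP; lia.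
  by have -> : (- `|u i|%N%:Z == u i) by apply/eqP; lia.
case: eqP => [?|_]; first lia.
case: (j != 0)%N => //=.
by case: eqP => [?|_]; first lia.
Qed.

Definition cntS n u P N i (j : nat) : int :=
  if j is j'.+1 then cnt n u P N i j' else 0.

Definition Rpol n u P N (i : 'I_n) : {poly int} :=
  if i \in P :|: N then \poly_(j < `|u i|.+2) (cntS n u P N i j.+1 - cntS n u P N i j)
  else \poly_(j < `|u i|.+2) cnt n u P N i j.

Definition Epol n (P N : {set 'I_n}) (i : 'I_n) : {poly int} :=
  if i \in P :|: N then 1 - 'X else 1.

Lemma coefR n u P N i D j : (j <= D)%N ->
  (Epol n P N i * Fpol n u P N D i)`_j = (Rpol n u P N i)`_j.
Proof.
move=> hj; rewrite /Epol /Rpol; case: ifP => iPN; rewrite coef_poly.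
  rewrite mulrBl mul1r coefB coefXM (coefF _ _ _ _ _ _ _ hj).
  case: ltnP => hL.
    case: j hj hL => [|j] hj hL /=; first by rewrite subr0.
    by rewrite (coefF _ _ _ _ _ _ _ (ltnW hj)).
  case: j hj hL => [|j] hj hL //=.
  rewrite (coefF _ _ _ _ _ _ _ (ltnW hj)) !cnt_big ?iPN ?subrr //; lia.
rewrite mul1r (coefF _ _ _ _ _ _ _ hj); case: ltnP => hL //.
by rewrite cnt_big ?iPN //; lia.
Qed.

Lemma hornerR n u P N i : (Rpol n u P N i).[1] = 1 :> int.
Proof.
rewrite /Rpol; case: ifP => iPN; rewrite horner_poly.
  under eq_bigr => j _ do rewrite expr1n mulr1.
  rewrite -(big_mkord xpredT (fun j => cntS n u P N i j.+1 - cntS n u P N i j)).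
  rewrite telescope_sumr // /= subr0 cnt_big ?iPN //.
under eq_bigr => j _ do rewrite expr1n cnt_notPN ?iPN //.
by rewrite (sum_ord_eq _ _ (fun _ => 1)) //.
Qed.

Definition equpto (D : nat) (p q : {poly int}) := forall j, (j <= D)%N -> p`_j = q`_j.

Lemma equpto_mul D p p' q q' : equpto D p p' -> equpto D q q' ->
  equpto D (p * q) (p' * q').
Proof.
move=> hp hq j hj; rewrite !coefM; apply: eq_bigr => k _.
rewrite hp ?hq //; [lia | have := ltn_ord k; lia].
Qed.

Lemma equpto_prod n D (F G : 'I_n -> {poly int}) :
  (forall i, equpto D (F i) (G i)) -> equpto D (\prod_i F i) (\prod_i G i).
Proof.
move=> h; apply: (big_ind2 (equpto D)).
- by move=> j.
- by move=> ? ? ? ? ? ?; apply: equpto_mul.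
- by move=> i _; apply: h.
Qed.

Theorem lemma6p4 (n : nat) (A : {set 'I_n}) (u : 'I_n -> int)
    (P N : {set 'I_n}) :
  (forall j : 'I_n, j \notin A -> 0 <= u j) ->
  N \subset A ->
  [disjoint P & N] ->
  exists Q : {poly int},
    Q.[1] = 1 /\
    forall d : nat,
      Q`_d = \sum_(k < d.+1)
               ((1 - 'X) ^+ (#|P| + #|N|))`_k * (hilb u P N (d - k))%:R.
Proof.
move=> _ _ hdis.
exists (\prod_i Rpol n u P N i); split.
  by rewrite horner_prod big1 // => i _; rewrite hornerR.
move=> d.
have hE : (1 - 'X) ^+ (#|P| + #|N|) = \prod_i Epol n P N i.
  rewrite /Epol -big_mkcond /= prodr_const cardsU disjoint_setI0 // cards0 subn0.
  by [].
rewrite hE.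
have h1 : equpto d (\prod_i Rpol n u P N i)
   ((\prod_i Epol n P N i) * \prod_i Fpol n u P N d i).
  rewrite -big_split /=; apply: equpto_prod => i j hj.
  by rewrite coefR.
rewrite h1 // coefM; apply: eq_bigr => k _.
congr (_ * _).
have hk : (d - k <= d)%N by lia.
rewrite hilbE; apply: (@equpto_prod n (d - k)) => // i j hj.
rewrite !coefF //; lia.
Qed.
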